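(* Let $s\ge2$, let $n_1,\dots,n_s$ be positive integers with $n=\sum_{i\in[s]}n_i$, let $k$ be a positive integer, and let $r_1,\dots,r_s$ be integers with $2\le r_1\le r_2\le\dots\le r_s$, $(r_i+1)\mid n_i$ for all $i\in[s]$, and $$\frac{n_s}{r_s+1}=\left\lceil\frac{k-\sum_{i\in[s-1]}r_in_i/(r_i+1)}{r_s}\right\rceil.$$ If $q>n$ is a prime power, then there exists (explicitly, as a subcode of a Reed–Solomon code obtained by splitting a parity row) an $[n,k,d]_q$ linear code which is $((n_1,r_1),\dots,(n_s,r_s))$-local and whose minimum distance equals $$d=n-k+2-\sum_{i\in[s-1]}\frac{n_i}{r_i+1}-\left\lceil\frac{k-\sum_{i\in[s-1]}r_in_i/(r_i+1)}{r_s}\right\rceil,$$ i.e. it attains the Singleton-like bound for codes with multiple localities.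
   Context: For a partition $\mathcal{T}_1,\dots,\mathcal{T}_s$ of $[n]=\{1,\dots,n\}$ with $|\mathcal{T}_i|=n_i$, a $q$-ary $[n,k,d]$ linear code is $((n_1,r_1),\dots,(n_s,r_s))$-local if for every $i\in[s]$, each code symbol indexed by an element of $\mathcal{T}_i$ is a linear combination of at most $r_i$ other code symbols indexed by elements of $\mathcal{T}_i$. *)

(* Defs.v *)
From HB Require Import structures.
From mathcomp Require Import all_boot all_order all_algebra all_field.
Set Implicit Arguments. Unset Strict Implicit. Unset Printing Implicit Defensive.
Import Order.TTheory GRing.Theory Num.Theory.
Local Open Scope ring_scope.

(* Codes of length n over F are subspaces of row vectors 'rV[F]_n; the code
   symbol at coordinate j of a codeword c is c 0 j. *)

Definition wt (F : fieldType) (n : nat) (v : 'rV[F]_n) : nat :=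
  #|[set j : 'I_n | v 0 j != 0]|.

Definition min_dist (F : fieldType) (n : nat) (C : {vspace 'rV[F]_n}) (d : nat) : Prop :=
  (exists2 c, c \in C & (c != 0) /\ wt c = d) /\
  (forall c, c \in C -> c != 0 -> (d <= wt c)%N).

Definition is_partition (n s : nat) (T : nat -> {set 'I_n}) (n_ : nat -> nat) : Prop :=
  [/\ (forall i, (i < s)%N -> #|T i| = n_ i),
      (forall i j, (i < j < s)%N -> [disjoint T i & T j]) &
      (forall x : 'I_n, exists2 i, (i < s)%N & x \in T i)].

Definition is_local (F : fieldType) (n s : nat) (T : nat -> {set 'I_n})
    (r_ : nat -> nat) (C : {vspace 'rV[F]_n}) : Prop :=
  forall i, (i < s)%N -> forall j, j \in T i ->
    exists R : {set 'I_n}, exists a : 'I_n -> F,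
      [/\ R \subset T i :\ j, (#|R| <= r_ i)%N &
          forall c, c \in C -> c 0 j = \sum_(l in R) a l * c 0 l].

Definition ceil_term (s k : nat) (n_ r_ : nat -> nat) : int :=
  Num.ceil (((k%:Z - \sum_(i < s.-1) (r_ i * (n_ i %/ (r_ i).+1))%:Z)%:~R : rat)
            / (r_ s.-1)%:R).

(* Main.v *)
Require Import Defs.
From HB Require Import structures.
From mathcomp Require Import all_boot all_order all_algebra all_field.
From mathcomp Require Import zify.
Set Implicit Arguments. Unset Strict Implicit. Unset Printing Implicit Defensive.
Import Order.TTheory GRing.Theory Num.Theory.
Local Open Scope ring_scope.

Section Gen.
Variable F : fieldType.

Definition dotr N (c w : 'rV[F]_N) : F := \sum_j c 0 j * w 0 j.
Definition Mof N (ws : seq 'rV[F]_N) : 'M[F]_(N, size ws) :=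
  \matrix_(j, l) (nth 0 ws l) 0 j.
Definition Lws N (ws : seq 'rV[F]_N) : 'Hom('rV[F]_N, 'rV[F]_(size ws)) :=
  linfun (mulmxr (Mof ws)).
Definition Kws N (ws : seq 'rV[F]_N) : {vspace 'rV[F]_N} := lker (Lws ws).

Lemma Kws_mem N (ws : seq 'rV[F]_N) c :
  reflect (forall w, w \in ws -> dotr c w = 0) (c \in Kws ws).
Proof.
rewrite memv_ker /Lws lfunE /=; apply: (iffP eqP) => H.
  move=> w /(nthP 0) [l Hl <-].
  have := congr1 (fun m : 'M_(1, size ws) => m 0 (Ordinal Hl)) H.
  by rewrite !mxE => <-; apply: eq_bigr => j _; rewrite !mxE.
apply/rowP => l; rewrite !mxE -[RHS](H (nth 0 ws l)) ?mem_nth //.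
by apply: eq_bigr => j _; rewrite !mxE.
Qed.

Lemma Kws_dim N (ws : seq 'rV[F]_N) : (N - size ws <= \dim (Kws ws))%N.
Proof.
have := limg_ker_dim (Lws ws) fullv.
rewrite capfv dimvf /dim /= mul1n -/(Kws ws).
have : (\dim (Lws ws @: fullv) <= size ws)%N.
  by have := dimvS (subvf (Lws ws @: fullv)); rewrite dimvf /dim /= mul1n.
move=> H1 H2; apply: (leq_trans (leq_sub2l N H1)); by rewrite -{1}H2 addnK.
Qed.

End Gen.

Lemma ext_sub (F : fieldType) (vT : vectType F) (V : {vspace vT}) w m :
  w \in V -> w != 0 -> (0 < m <= \dim V)%N ->
  exists U : {vspace vT}, [/\ (U <= V)%VS, w \in U & \dim U = m].
Proof.
move=> wV w0; elim: m => [|m IH] //= Hm.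
case: m IH Hm => [|m] IH Hm.
  by exists <[w]>%VS; rewrite -memvE wV memv_line dim_vline w0.
have [U [UV wU dU]] := IH (ltnW Hm).
have [v vV vU] : exists2 v, v \in V & v \notin U.
  apply/subvPn; apply: contraTN Hm => VU.
  by rewrite -leqNgt -dU dimvS.
exists (U + <[v]>)%VS; split.
- by rewrite subv_add UV -memvE.
- exact: (subvP (addvSl U <[v]>)).
- have h1 := dimv_leqif_eq (addvSl U <[v]>).
  have h2 : U != (U + <[v]>)%VS.
    apply: contra vU => /eqP ->; exact: (subvP (addvSr U <[v]>) _ (memv_line v)).
  have h3 := (dimv_add_leqif U <[v]>).1.
  rewrite dim_vline in h3.
  have h4 : (\dim U < \dim (U + <[v]>))%N by rewrite ltn_neqAle h1.2 h2 h1.1.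
  move: h4 h3; rewrite dU; case: (v != 0) => /=; lia.
Qed.

Lemma card_inj_le (n u : nat) (A : {set 'I_n}) (f : 'I_n -> nat) :
  {in A &, injective f} -> (forall j, j \in A -> f j < u)%N -> (#|A| <= u)%N.
Proof.
move=> finj fu; rewrite cardE -(size_iota 0 u) -(size_map f).
apply: uniq_leq_size.
  by rewrite map_inj_in_uniq ?enum_uniq // => x y; rewrite !mem_enum; apply: finj.
by move=> x /mapP [j]; rewrite mem_enum => jA ->; rewrite mem_iota add0n fu.
Qed.

Lemma mom_wt (F : fieldType) n (al : 'I_n -> F) (c : 'rV[F]_n) t :
  injective al -> (forall e, (e <= t)%N -> \sum_j c 0 j * al j ^+ e = 0) ->
  c != 0 -> (t.+2 <= wt c)%N.
Proof.
move=> alI Hm c0; rewrite leqNgt; apply/negP => Hw.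
set S := [set j | c 0 j != 0].
have [j0 Hj0] : exists j0, c 0 j0 != 0.
  apply/existsP; apply: contraR c0 => /existsPn H; apply/eqP/rowP => j.
  by rewrite mxE; have := H j; rewrite negbK => /eqP.
have j0S : j0 \in S by rewrite inE.
pose p := \prod_(j <- enum (S :\ j0)) ('X - (al j)%:P).
have sp : (size p <= t.+1)%N.
  rewrite /p size_prod_XsubC -cardE.
  by move: Hw; rewrite /wt -/S (cardsD1 j0 S) j0S /= add1n ltnS.
have E1 : \sum_j c 0 j * p.[al j] = 0.
  under eq_bigr => j _ do rewrite horner_coef mulr_sumr.
  rewrite exchange_big /= big1 // => e _.
  under eq_bigr => j _ do rewrite mulrCA.
  rewrite -mulr_sumr Hm ?mulr0 //.
  by rewrite -ltnS (leq_trans (ltn_ord e) sp).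
have E2 : \sum_j c 0 j * p.[al j] = c 0 j0 * p.[al j0].
  rewrite (bigD1 j0) //= big1 ?addr0 // => j jj0.
  have [cj0|cjn0] := eqVneq (c 0 j) 0; first by rewrite cj0 mul0r.
  rewrite /p horner_prod; apply/eqP; rewrite mulf_eq0; apply/orP; right.
  rewrite prodf_seq_eq0; apply/hasP; exists j.
    by rewrite mem_enum !inE jj0 cjn0.
  by rewrite hornerXsubC subrr eqxx.
have : c 0 j0 * p.[al j0] != 0.
  rewrite mulf_neq0 // /p horner_prod prodf_seq_neq0; apply/allP => j.
  rewrite mem_enum !inE => /andP [jj0 _]; rewrite hornerXsubC subr_eq0.
  by apply: contra jj0 => /eqP /alI ->.
by rewrite -E2 E1 eqxx.
Qed.

Lemma ceil_arith (z k : nat) (n_ r_ : nat -> nat) :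
  (0 < r_ z)%N -> (n_ z %/ (r_ z).+1)%:Z = ceil_term z.+1 k n_ r_ ->
  (k <= (\sum_(i<z) r_ i * (n_ i %/ (r_ i).+1)) + r_ z * (n_ z %/ (r_ z).+1))%N /\
  ((\sum_(i<z) r_ i * (n_ i %/ (r_ i).+1)) + r_ z * (n_ z %/ (r_ z).+1) - k < r_ z)%N.
Proof.
move=> r0 Hc; rewrite /ceil_term /= in Hc.
set A := (\sum_(i<z) r_ i * (n_ i %/ (r_ i).+1))%N.
have sA : \sum_(i<z) (r_ i * (n_ i %/ (r_ i).+1))%:Z = A%:Z.
  by symmetry; rewrite -natz natr_sum; apply: eq_bigr => i _; exact: natz.
rewrite sA in Hc.
move: Hc; set x := (_ / _) => Hc.
have := ceil_itv x; rewrite -Hc /x => /andP [h1 h2].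
have rp : (0 : rat) < (r_ z)%:R by rewrite ltr0n.
rewrite ltr_pdivlMr // in h1; rewrite ler_pdivrMr // in h2.
have rE : ((r_ z)%:R : rat) = ((r_ z)%:Z)%:~R by [].
rewrite rE -intrM ltr_int in h1; rewrite rE -intrM ler_int in h2.
move: h1 h2; clearbody A; move: (n_ z %/ (r_ z).+1)%N (r_ z) r0 => M r r0 h1 h2.
clear -h1 h2 r0; nia.
Qed.

Section Main.
Variables (F : finFieldType) (z t n : nat) (n_ r_ : nat -> nat) (T : nat -> {set 'I_n}).
Hypothesis HT : is_partition z.+1 T n_.
Hypothesis Hdiv : forall i, (i < z.+1)%N -> ((r_ i).+1 %| n_ i)%N.
Hypothesis Hq : (n < #|F|)%N.

Definition pos i (j : 'I_n) := index j (enum (T i)).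
Definition mm i := (n_ i %/ (r_ i).+1)%N.
Definition grp i g : 'rV[F]_n :=
  \row_j (if (j \in T i) && (pos i j %/ (r_ i).+1 == g)%N then 1 else 0).
Definition al (j : 'I_n) : F := nth 0 (enum F) j.
Definition mom e : 'rV[F]_n := \row_j al j ^+ e.
Definition ws := [seq grp i g | i <- iota 0 z.+1, g <- iota 0 (mm i)] ++
                 [seq mom e | e <- iota 1 t].
Definition C0 := Kws ws.

Lemma pos_lt i j : (i < z.+1)%N -> j \in T i -> (pos i j < n_ i)%N.
Proof.
case: HT => Hc _ _ iz jT; rewrite /pos -(Hc i iz) cardE index_mem mem_enum //.
Qed.

Lemma pos_inj i j j' : j \in T i -> j' \in T i -> pos i j = pos i j' -> j = j'.
Proof.
move=> jT j'T E; have := congr1 (nth j (enum (T i))) E.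
by rewrite /pos !nth_index ?mem_enum.
Qed.

Lemma al_inj : injective al.
Proof.
move=> j j' /eqP; rewrite /al nth_uniq ?enum_uniq -?cardT.
- by move/eqP/val_inj.
- exact: (ltn_trans (ltn_ord j) Hq).
- exact: (ltn_trans (ltn_ord j') Hq).
- by [].
Qed.

Lemma T_disj i1 i2 j : (i1 < z.+1)%N -> (i2 < z.+1)%N -> i1 != i2 ->
  j \in T i1 -> j \notin T i2.
Proof.
case: HT => _ Hd _ h1 h2 ne jT.
case: (ltngtP i1 i2) ne => // [lt|lt] _.
  by rewrite (disjointFr (Hd i1 i2 _) jT) // lt h2.
by rewrite (disjointFl (Hd i2 i1 _) jT) // lt h1.
Qed.

Lemma size_ws : size ws = ((\sum_(i < z.+1) mm i) + t)%N.
Proof.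
rewrite /ws size_cat size_map size_iota size_allpairs_dep; congr (_ + _)%N.
rewrite sumnE big_map -(big_mkord xpredT) /index_iota subn0.
by apply: eq_bigr => i _; rewrite size_iota.
Qed.

Lemma grp_in i g : (i < z.+1)%N -> (g < mm i)%N -> grp i g \in ws.
Proof.
move=> iz gm; rewrite mem_cat; apply/orP; left.
by apply: allpairs_f_dep; rewrite mem_iota.
Qed.

Lemma mom_in e : (0 < e <= t)%N -> mom e \in ws.
Proof.
move=> /andP [e0 et]; rewrite mem_cat; apply/orP; right.
by apply: map_f; rewrite mem_iota e0 /=; lia.
Qed.


Lemma grpE i g j : grp i g 0 j =
  if (j \in T i) && (pos i j %/ (r_ i).+1 == g)%N then 1 else 0.
Proof. by rewrite mxE. Qed.

Lemma div_lt i j : (i < z.+1)%N -> j \in T i -> (pos i j %/ (r_ i).+1 < mm i)%N.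
Proof. by move=> iz jT; rewrite ltn_divLR // /mm divnK ?Hdiv ?pos_lt. Qed.

Lemma sum_groups (c : 'rV[F]_n) :
  \sum_j c 0 j = \sum_(i < z.+1) \sum_(0 <= g < mm i) dotr c (grp i g).
Proof.
rewrite /dotr; under [RHS]eq_bigr => i _ do rewrite exchange_big /=.
rewrite [RHS]exchange_big /=; apply: eq_bigr => j _.
under [RHS]eq_bigr => i _ do rewrite -mulr_sumr.
rewrite -mulr_sumr -[LHS]mulr1; congr (_ * _).
case: HT => _ _ Hcov; have [i0 i0z jT] := Hcov j.
rewrite (bigD1 (Ordinal i0z)) //= [X in _ + X]big1 ?addr0; last first.
  move=> i ine; rewrite big1_seq // => g _; rewrite grpE.
  suff -> : (j \in T i) = false by [].
  apply/negbTE/(T_disj i0z (ltn_ord i)) => //.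
  by apply: contra ine => /eqP E; apply/eqP/val_inj; rewrite /= E.
rewrite big_mkord (bigD1 (Ordinal (div_lt i0z jT))) //= [X in _ + X]big1 ?addr0.
  by rewrite grpE jT eqxx.
move=> g /= gne; rewrite grpE jT /=; case: eqP => // E; case/eqP: gne.
by apply: val_inj; rewrite /= E.
Qed.


Lemma C0_mom c : c \in C0 -> forall e, (e <= t)%N -> \sum_j c 0 j * al j ^+ e = 0.
Proof.
move=> /Kws_mem H [|e] et.
  under eq_bigr do rewrite expr0 mulr1.
  rewrite sum_groups big1 // => i _; rewrite big1_seq // => g /andP [_].
  by rewrite mem_index_iota => /andP [_ gm]; apply: H; apply: grp_in.
have := H (mom e.+1) (mom_in _); rewrite /dotr; under eq_bigr do rewrite mxE.
by apply.
Qed.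

Lemma grp_card i a :
  (#|[set l | (l \in T i) && (pos i l %/ (r_ i).+1 == a)%N]| <= (r_ i).+1)%N.
Proof.
apply: (@card_inj_le _ _ _ (fun l => pos i l %% (r_ i).+1)%N); last first.
  by move=> j _; rewrite ltn_mod.
move=> x y; rewrite !inE => /andP [xT /eqP xa] /andP [yT /eqP ya] E.
apply: (pos_inj xT yT).
by rewrite (divn_eq (pos i x) (r_ i).+1) (divn_eq (pos i y) (r_ i).+1) xa ya E.
Qed.

Lemma C0_local c i j : c \in C0 -> (i < z.+1)%N -> j \in T i ->
  c 0 j = \sum_(l in [set l | (l \in T i) &&
        (pos i l %/ (r_ i).+1 == pos i j %/ (r_ i).+1)%N] :\ j) (-1) * c 0 l.
Proof.
move=> /Kws_mem H iz jT; set G := [set l | _].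
have := H _ (grp_in iz (div_lt iz jT)); rewrite /dotr.
have -> : \sum_l c 0 l * grp i (pos i j %/ (r_ i).+1)%N 0 l = \sum_(l in G) c 0 l.
  rewrite [RHS]big_mkcond; apply: eq_bigr => l _; rewrite grpE inE.
  by case: ifP => _; rewrite ?mulr1 ?mulr0.
rewrite (big_setD1 j) ?inE ?jT ?eqxx //= => /eqP; rewrite addr_eq0 => /eqP ->.
by rewrite -sumrN; apply: eq_bigr => l _; rewrite mulN1r.
Qed.


Definition wv e : 'rV[F]_(t.+2) :=
  \row_(p < t.+2) \sum_j (if (j \in T z) && (pos z j == p) then al j ^+ e else 0).
Definition emb (v : 'rV[F]_(t.+2)) : 'rV[F]_n :=
  \row_j \sum_(p < t.+2) (if (j \in T z) && (pos z j == p) then v 0 p else 0).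

Lemma emb_mom v e : dotr v (wv e) = \sum_j emb v 0 j * al j ^+ e.
Proof.
rewrite /dotr; under eq_bigr do rewrite mxE mulr_sumr.
rewrite exchange_big; apply: eq_bigr => j _; rewrite mxE mulr_suml.
by apply: eq_bigr => p _; case: ifP; rewrite ?mulr0 ?mul0r.
Qed.

Lemma emb_supp v j : emb v 0 j != 0 -> (j \in T z) && (pos z j < t.+2)%N.
Proof.
rewrite mxE; apply: contraR => H; rewrite big1 // => p _.
case: ifP => // /andP [jT /eqP E]; case/negP: H.
by rewrite jT E ltn_ord.
Qed.

Lemma emb_nz v : (t.+2 <= n_ z)%N -> v != 0 -> emb v != 0.
Proof.
move=> tn v0.
have [p vp] : exists p, v 0 p != 0.
  apply/existsP; apply: contraR v0 => /existsPn H; apply/eqP/rowP => p.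
  by rewrite mxE; have := H p; rewrite negbK => /eqP.
case: HT => Hc _ _.
have sz : size (enum (T z)) = n_ z by rewrite -cardE Hc.
have [x0 _] : exists x0, x0 \in T z.
  by apply/card_gt0P; rewrite Hc //; apply: leq_trans tn.
pose j := nth x0 (enum (T z)) p.
have pl : (p < size (enum (T z)))%N by rewrite sz (leq_trans (ltn_ord p) tn).
have jT : j \in T z by rewrite -mem_enum mem_nth.
have posE : pos z j = p by rewrite /pos index_uniq ?enum_uniq.
apply/eqP => e0; have := congr1 (fun w : 'rV[F]_n => w 0 j) e0.
rewrite !mxE (bigD1 p) //= jT posE eqxx big1 ?addr0; first by move/eqP; rewrite (negbTE vp).
move=> p' pne /=; case: eqP => // E; case/eqP: pne.
exact: val_inj.
Qed.

Lemma emb_wt v : (wt (emb v) <= t.+2)%N.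
Proof.
rewrite /wt; apply: (@card_inj_le _ _ _ (pos z)).
  move=> x y; rewrite !inE => /emb_supp/andP [xT _] /emb_supp/andP [yT _].
  exact: pos_inj.
by move=> j; rewrite inE => /emb_supp/andP [_ ->].
Qed.

Lemma emb_in v : (t.+2 <= (r_ z).+1)%N ->
  v \in Kws [seq wv e | e <- iota 0 t.+1] -> emb v \in C0.
Proof.
move=> tr /Kws_mem Hv.
have M0 e : (e <= t)%N -> \sum_j emb v 0 j * al j ^+ e = 0.
  by move=> et; rewrite -emb_mom; apply: Hv; apply: map_f; rewrite mem_iota.
apply/Kws_mem => w; rewrite mem_cat => /orP [].
  case/allpairsPdep => [i [g [iI gI ->]]]; rewrite mem_iota /= in iI.
  rewrite /dotr.
  case: (boolP ((i == z) && (g == 0%N))) => [/andP [/eqP -> /eqP ->] | H].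
    rewrite -[RHS](M0 0%N) //; apply: eq_bigr => j _; rewrite grpE expr0 mulr1.
    have [e0|ne] := eqVneq (emb v 0 j) 0; first by rewrite e0 !mul0r.
    have /andP [jT pj] := emb_supp ne.
    by rewrite jT divn_small ?eqxx ?mulr1 //; exact: leq_trans pj tr.
  rewrite big1 // => j _; rewrite grpE.
  have [e0|ne] := eqVneq (emb v 0 j) 0; first by rewrite e0 mul0r.
  have /andP [jT pj] := emb_supp ne.
  case: (eqVneq i z) => [iz|iz].
    subst i; rewrite jT divn_small ?(leq_trans pj tr) //.
    by move: H; rewrite eqxx /= => gn; rewrite eq_sym (negbTE gn) mulr0.
  by rewrite (negbTE (T_disj (ltnSn z) _ _ jT)) ?mulr0 // eq_sym.
move/mapP => [e eI ->]; rewrite mem_iota in eI.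
rewrite /dotr -[RHS](M0 e); last by move: eI; lia.
by apply: eq_bigr => j _; rewrite [mom e 0 j]mxE.
Qed.


Lemma v_exists : exists2 v, v \in Kws [seq wv e | e <- iota 0 t.+1] & v != 0.
Proof.
have d := Kws_dim [seq wv e | e <- iota 0 t.+1]; rewrite size_map size_iota in d.
exists (vpick (Kws [seq wv e | e <- iota 0 t.+1])); first exact: memv_pick.
by rewrite vpick0 -dimv_eq0 -lt0n (leq_trans _ d) // subSnn.
Qed.

Lemma main_sec k : (0 < k)%N -> (k <= n - size ws)%N ->
  (t.+2 <= (r_ z).+1)%N -> ((r_ z).+1 <= n_ z)%N ->
  exists C : {vspace 'rV[F]_n},
    [/\ \dim C = k, min_dist C t.+2 & is_local z.+1 T r_ C].
Proof.
move=> k0 kn tr rn.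
have [v vK v0] := v_exists.
have wC0 := emb_in tr vK.
have w0 := emb_nz (leq_trans tr rn) v0.
have kb : (0 < k <= \dim C0)%N by rewrite k0 (leq_trans kn (Kws_dim ws)).
have [C [CC0 wC dC]] := ext_sub wC0 w0 kb.
exists C; split => //.
  split.
    exists (emb v) => //; split => //; apply/eqP; rewrite eqn_leq emb_wt.
    exact: mom_wt al_inj (C0_mom wC0) w0.
  move=> c cC c0; exact: mom_wt al_inj (C0_mom (subvP CC0 _ cC)) c0.
move=> i iz j jT.
set G := [set l | (l \in T i) && (pos i l %/ (r_ i).+1 == pos i j %/ (r_ i).+1)%N].
exists (G :\ j), (fun _ => -1); split.
- by apply/subsetP => l; rewrite !inE => /andP [-> /andP [-> _]].
- have := grp_card i (pos i j %/ (r_ i).+1)%N; rewrite -/G (cardsD1 j G).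
  by rewrite !inE jT eqxx /= add1n ltnS.
- by move=> c cC; exact: C0_local (subvP CC0 _ cC) iz jT.
Qed.

End Main.

Lemma sumPosz z (f : nat -> nat) : \sum_(i < z) (f i)%:Z = (\sum_(i < z) f i)%N%:Z.
Proof. by symmetry; rewrite -natz natr_sum; apply: eq_bigr => i _; exact: natz. Qed.

Theorem theorem3 (F : finFieldType) (s k n : nat) (n_ r_ : nat -> nat) :
  (2 <= s)%N ->
  (forall i, (i < s)%N -> (0 < n_ i)%N) ->
  n = (\sum_(i < s) n_ i)%N ->
  (0 < k)%N ->
  (2 <= r_ 0)%N ->
  (forall i j, (i <= j < s)%N -> (r_ i <= r_ j)%N) ->
  (forall i, (i < s)%N -> (r_ i).+1 %| n_ i)%N ->
  (n_ s.-1 %/ (r_ s.-1).+1)%:Z = ceil_term s k n_ r_ ->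
  (n < #|F|)%N ->
  forall T : nat -> {set 'I_n}, is_partition s T n_ ->
  exists C : {vspace 'rV[F]_n}, exists d : nat,
    [/\ \dim C = k, min_dist C d, is_local s T r_ C &
        d%:Z = n%:Z - k%:Z + 2 - (\sum_(i < s.-1) (n_ i %/ (r_ i).+1)%:Z)
               - ceil_term s k n_ r_].
Proof.
case: s => [|z] // Hs Hnpos Hn Hk Hr0 Hmono Hdiv Hc Hq T HT.
rewrite /= in Hc *.
have rz : (0 < r_ z)%N.
  by apply: (leq_trans _ (Hmono 0%N z _)); [apply: leq_trans Hr0 | rewrite leq0n /=].
have [h1 h2] := ceil_arith rz Hc.
rewrite -Hc (sumPosz z (fun i => n_ i %/ (r_ i).+1)%N).
have nE : n = ((\sum_(i<z) (n_ i %/ (r_ i).+1)) + (n_ z %/ (r_ z).+1) +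
   (\sum_(i<z) r_ i * (n_ i %/ (r_ i).+1)) + r_ z * (n_ z %/ (r_ z).+1))%N.
  rewrite Hn (eq_bigr (fun i : 'I_z.+1 => (n_ i %/ (r_ i).+1) + r_ i * (n_ i %/ (r_ i).+1))%N); last first.
    by move=> i _; rewrite -{1}(divnK (Hdiv i (ltn_ord i))) mulnS [(_ * r_ i)%N]mulnC.
  rewrite big_split /= !big_ord_recr /=.
  move: (\sum_(i<z) (n_ i %/ (r_ i).+1))%N (\sum_(i<z) r_ i * (n_ i %/ (r_ i).+1))%N => a b.
  lia.
set t := ((\sum_(i < z) r_ i * (n_ i %/ (r_ i).+1)) + r_ z * (n_ z %/ (r_ z).+1) - k)%N.
have sw := size_ws F z t n_ r_ T.
rewrite big_ord_recr /= in sw.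
have rn : ((r_ z).+1 <= n_ z)%N by apply: dvdn_leq; [exact: Hnpos | exact: Hdiv].
have kn : (k <= n - size (ws F z t n_ r_ T))%N.
  rewrite sw /mm nE /t; move: h1 h2; move: (r_ z * (n_ z %/ (r_ z).+1))%N => c; move: (\sum_(i < z) n_ i %/ (r_ i).+1)%N (\sum_(i < z) r_ i * (n_ i %/ (r_ i).+1))%N (n_ z %/ (r_ z).+1)%N => a b d; lia.
have tr : (t.+2 <= (r_ z).+1)%N by rewrite /t; move: h2; move: (\sum_(i < z) r_ i * (n_ i %/ (r_ i).+1) + r_ z * (n_ z %/ (r_ z).+1))%N => a; lia.
have [C [dC mC lC]] := main_sec HT Hdiv Hq Hk kn tr rn.
exists C, t.+2; split => //.
rewrite nE /t; move: h1 h2; move: (r_ z * (n_ z %/ (r_ z).+1))%N => c; move: (\sum_(i < z) n_ i %/ (r_ i).+1)%N (\sum_(i < z) r_ i * (n_ i %/ (r_ i).+1))%N (n_ z %/ (r_ z).+1)%N => a b d; lia.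
Qed.
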